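(* Let $a^*(\lambda)$ be the density on $[0,9]$ of the push-forward of the normalized Haar measure on $\{|x_1|=|x_2|=1\}$ under $P_2=(1+x_1+x_2)(1+x_1^{-1}+x_2^{-1})$, and let $c(t)=\int_0^1\frac{a^*(\lambda)}{1-t\lambda}d\lambda=\sum_{m\ge0}c_mt^m$. Let $\widetilde{\mathcal L}_2(\lambda,\theta)=9\theta^2-\lambda(10\theta^2+10\theta+3)+\lambda^2(\theta+1)^2$. Then $c_0=\frac14$ and \[ \Bigl[\widetilde{\mathcal L}_2\Bigl(\frac1t,-\theta_t-1\Bigr)c(t)\Bigr]_-=-\frac{6}{\pi^2\,t}. \]
   Context: $\theta_t=t\frac{d}{dt}$. For an operator $\mathcal M(\lambda,\theta)=\sum d_{ij}\lambda^i\theta^j$, $\mathcal M(\frac1t,-\theta_t-1)$ denotes $\sum d_{ij}t^{-i}(-\theta_t-1)^j$. For a Laurent series $\sum_na_nt^n$, $[\sum_na_nt^n]_-=\sum_{n<0}a_nt^n$. *)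

(* Defs.v *)
From HB Require Import structures.
From mathcomp Require Import all_boot all_order all_algebra.
From mathcomp Require Import all_classical all_reals all_analysis.
From mathcomp Require Import complex.
Set Implicit Arguments. Unset Strict Implicit. Unset Printing Implicit Defensive.
Import Order.TTheory GRing.Theory Num.Theory.
Local Open Scope classical_set_scope.
Local Open Scope ring_scope.

Section Defs.
Variable R : realType.

Definition circ (s : R) : R[i] :=
  (cos (2 * pi * s) +i* sin (2 * pi * s))%C.

(** P_2(x1,x2) = (1+x1+x2)(1+x1^{-1}+x2^{-1}) evaluated on the torus
    |x1| = |x2| = 1, parametrized by angles s = (s1,s2) in [0,1]^2.
    The value is real; we take its real part. *)
Definition P2_torus (s : R * R) : R :=
  let x1 := circ s.1 in let x2 := circ s.2 in
  complex.Re ((1 + x1 + x2) * (1 + x1^-1 + x2^-1)).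

(** Normalized Haar measure on the torus {|x1|=|x2|=1}, transported to the
    angle square [0,1]^2 (product Lebesgue measure restricted to [0,1]^2). *)
Definition haar_torus : set (R * R) -> \bar R :=
  fun A => ((@lebesgue_measure R) \x (@lebesgue_measure R))%E
             (A `&` (`[0%R, 1%R]%classic `*` `[0%R, 1%R]%classic)).

(** The push-forward of the Haar measure under P_2: a measure on R
    (supported on [0,9]) whose density is a^*(lambda). *)
Definition P2_distribution : set R -> \bar R := pushforward haar_torus P2_torus.

(** c_m = \int_0^1 lambda^m a^*(lambda) d lambda, i.e. the m-th Taylor coefficient
    of c(t) = \int_0^1 a^*(lambda)/(1 - t lambda) d lambda. *)
Definition c_coef (m : nat) : R :=
  fine (\int[P2_distribution]_(l in `[0%R, 1%R]%classic) (l ^+ m)%:E)%E.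

(** Formal Laurent series in t with real coefficients: coefficient maps int -> R
    (a_n is the coefficient of t^n). *)
Definition laurent := int -> R.

Definition series_of (a : nat -> R) : laurent :=
  fun n => match n with Posz m => a m | Negz _ => 0 end.

(** theta_t = t d/dt : t^n |-> n t^n. *)
Definition theta_t (f : laurent) : laurent := fun n => n%:~R * f n.

Definition mul_tinv (i : nat) (f : laurent) : laurent := fun n => f (n + i%:Z).

Definition mthetam1_pow (j : nat) (f : laurent) : laurent :=
  iter j (fun g : laurent => fun n => - theta_t g n - g n) f.

(** An operator M(lambda, theta) = sum d_ij lambda^i theta^j, given as a list of
    triples (i, j, d_ij); [op_subst M f] is M(1/t, -theta_t - 1) f
    = sum d_ij t^{-i} (-theta_t - 1)^j f. *)
Definition op_subst (M : seq (nat * nat * R)) (f : laurent) : laurent :=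
  fun n => \sum_(e <- M) e.2 * mul_tinv e.1.1 (mthetam1_pow e.1.2 f) n.

(** L~_2(lambda,theta) = 9 theta^2 - lambda (10 theta^2 + 10 theta + 3)
                         + lambda^2 (theta + 1)^2, expanded into monomials. *)
Definition L2tilde : seq (nat * nat * R) :=
  [:: (0%N, 2%N, 9); (1%N, 2%N, -10); (1%N, 1%N, -10); (1%N, 0%N, -3);
      (2%N, 2%N, 1); (2%N, 1%N, 2); (2%N, 0%N, 1)].

Definition neg_part (f : laurent) : laurent :=
  fun n => if (n < 0)%R then f n else 0.

End Defs.

(* Main.v *)
Require Import Defs.
From HB Require Import structures.
From mathcomp Require Import all_boot all_order all_algebra.
From mathcomp Require Import all_classical all_reals all_analysis.
From mathcomp Require Import complex measurable_realfun.
From mathcomp Require Import ring lra zify.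
Import Order.TTheory GRing.Theory Num.Theory.
Import numFieldNormedType.Exports.
Local Open Scope ring_scope.

Section SM.
Variable R : realType.
Definition Q (z : R * R) : R :=
  (1 + cos (2 * pi * z.1) + cos (2 * pi * z.2)) ^+ 2 +
  (sin (2 * pi * z.1) + sin (2 * pi * z.2)) ^+ 2.
Lemma P2E : @P2_torus R = Q.
Proof.
apply/funext => -[s1 s2]; rewrite /P2_torus /circ /Q /=.
set a := cos _; set b := sin _; set c := cos _; set d := sin _.
have -> : a ^+ 2 + b ^+ 2 = 1 by rewrite cos2Dsin2.
have -> : c ^+ 2 + d ^+ 2 = 1 by rewrite cos2Dsin2.
rewrite !divr1; ring.
Qed.

Lemma Q_ge0 z : 0 <= Q z.
Proof. by rewrite /Q addr_ge0 // sqr_ge0. Qed.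

Lemma QE1 z : Q z = 3 + 2 * cos (2 * pi * z.1) + 2 * cos (2 * pi * z.2)
   + 2 * cos (2 * pi * z.1 - 2 * pi * z.2).
Proof.
rewrite /Q cosB.
have := cos2Dsin2 (2 * pi * z.1); have := cos2Dsin2 (2 * pi * z.2).
move: (cos _) (sin _) (cos _) (sin _) => a b c d h1 h2.
nra.
Qed.

Lemma QE2 z : Q z = 1 + 8 * cos (pi * z.1) * cos (pi * z.2) * cos (pi * z.1 - pi * z.2).
Proof.
have e : forall x : R, 2 * pi * x = (pi * x) *+ 2 by move=> x; rewrite mulr2n; ring.
rewrite /Q !e !sin_mulr2n !cos_mulr2n cosB.
have := cos2Dsin2 (pi * z.1); have := cos2Dsin2 (pi * z.2).
move: (cos _) (sin _) (cos _) (sin _) => a b c d h1 h2.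
nra.
Qed.
Lemma cos_pos (t : R) : -(1/2) < t < 1/2 -> 0 < cos (pi * t).
Proof.
move=> /andP[h1 h2]; apply: cos_gt0_pihalf; have hp := pi_gt0 R.
apply/andP; split; nra.
Qed.
Lemma cos_nneg (t : R) : -(1/2) <= t <= 1/2 -> 0 <= cos (pi * t).
Proof.
move=> /andP[h1 h2]; apply: cos_ge0_pihalf; have hp := pi_gt0 R.
apply/andP; split; nra.
Qed.
Lemma cos_neg (t : R) : 1/2 < t <= 1 -> cos (pi * t) < 0.
Proof.
move=> /andP[h1 h2].
have -> : pi * t = pi * (t - 1) + pi by ring.
rewrite cosDpi oppr_lt0; apply: cos_pos; apply/andP; split; lra.
Qed.
Lemma cos_npos (t : R) : 1/2 <= t <= 1 -> cos (pi * t) <= 0.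
Proof.
move=> /andP[h1 h2].
have -> : pi * t = pi * (t - 1) + pi by ring.
rewrite cosDpi oppr_le0; apply: cos_nneg; apply/andP; split; lra.
Qed.
Lemma cos_piN (t : R) : cos (pi * t) = cos (pi * (- t)).
Proof. by rewrite mulrN cosN. Qed.

Lemma sec1 (x y : R) : 0 <= x < 1/2 -> 0 <= y <= 1 ->
  (Q (x, y) <= 1 <-> 1/2 <= y <= x + 1/2).
Proof.
move=> /andP[x0 xh] /andP[y0 y1].
rewrite QE2 /= -mulrBr.
have ha : 0 < cos (pi * x) by apply: cos_pos; apply/andP; split; lra.
move: ha; set a := cos (pi * x); set b := cos (pi * y); set c := cos (pi * (x - y)).
move=> ha; split.
- move=> h; case: (ltP y (1/2)) => hy.
    have hb : 0 < b by apply: cos_pos; apply/andP; split; lra.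
    have hc : 0 < c by apply: cos_pos; apply/andP; split; lra.
    have : 0 < a * b * c by rewrite !mulr_gt0.
    lra.
  case: (leP y (x + 1/2)) => hy2; first by apply/andP; split.
  have hb : b < 0 by apply: cos_neg; apply/andP; split; lra.
  have hc : c < 0 by rewrite /c cos_piN; apply: cos_neg; apply/andP; split; lra.
  have : 0 < a * (- b) * (- c) by rewrite !mulr_gt0 // oppr_gt0.
  lra.
- move=> /andP[hy1 hy2].
  have hb : b <= 0 by apply: cos_npos; apply/andP; split; lra.
  have hc : 0 <= c by apply: cos_nneg; apply/andP; split; lra.
  have : 0 <= a * (- b) * c by rewrite !mulr_ge0 // ?oppr_ge0 // ltW.
  lra.
Qed.

Lemma sec2 (x y : R) : 1/2 < x <= 1 -> 0 <= y <= 1 ->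
  (Q (x, y) <= 1 <-> x - 1/2 <= y <= 1/2).
Proof.
move=> /andP[x0 xh] /andP[y0 y1].
rewrite QE2 /= -mulrBr.
have ha : cos (pi * x) < 0 by apply: cos_neg; apply/andP; split; lra.
move: ha; set a := cos (pi * x); set b := cos (pi * y); set c := cos (pi * (x - y)).
move=> ha; split.
- move=> h; case: (ltP y (x - 1/2)) => hy.
    have hb : 0 < b by apply: cos_pos; apply/andP; split; lra.
    have hc : c < 0 by apply: cos_neg; apply/andP; split; lra.
    have : 0 < (- a) * b * (- c) by rewrite !mulr_gt0 // oppr_gt0.
    lra.
  case: (leP y (1/2)) => hy2; first by apply/andP; split.
  have hb : b < 0 by apply: cos_neg; apply/andP; split; lra.
  have hc : 0 < c by apply: cos_pos; apply/andP; split; lra.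
  have : 0 < (- a) * (- b) * c by rewrite !mulr_gt0 // oppr_gt0.
  lra.
- move=> /andP[hy1 hy2].
  have hb : 0 <= b by apply: cos_nneg; apply/andP; split; lra.
  have hc : 0 <= c by apply: cos_nneg; apply/andP; split; lra.
  have : 0 <= (- a) * b * c by rewrite !mulr_ge0 // oppr_ge0 ltW.
  lra.
Qed.
Notation mu := (@lebesgue_measure R).

Lemma dD (f g : R -> R) (df dg x : R) : is_derive x 1 f df -> is_derive x 1 g dg ->
  is_derive x 1 (fun y => f y + g y) (df + dg).
Proof. move=> h1 h2; exact: (@is_deriveD _ _ _ f g x 1 df dg). Qed.
Lemma dM (f g : R -> R) (df dg x : R) : is_derive x 1 f df -> is_derive x 1 g dg ->
  is_derive x 1 (fun y => f y * g y) (f x * dg + g x * df).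
Proof. move=> h1 h2; exact: (@is_deriveM _ _ f g x 1 df dg). Qed.
Lemma dC (k x : R) : is_derive x 1 (fun _ : R => k) 0.
Proof. exact: is_derive_cst. Qed.
Lemma dId (x : R) : is_derive x 1 (fun y : R => y) 1.
Proof. exact: is_derive_id. Qed.
Lemma dsin (a c x : R) : is_derive x 1 (fun y => sin (a * y + c)) (a * cos (a * x + c)).
Proof.
have -> : (fun y => sin (a * y + c)) = sin \o (a \*: (@id R) + cst c) by [].
apply: is_derive_eq; rewrite /= addr0 mulrC; congr (_ * _).
by rewrite /GRing.scale /= mulr1.
Qed.
Lemma dcos (a c x : R) : is_derive x 1 (fun y => cos (a * y + c)) (- (a * sin (a * x + c))).
Proof.
have -> : (fun y => cos (a * y + c)) = cos \o (a \*: (@id R) + cst c) by [].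
apply: is_derive_eq; rewrite /= addr0 mulNr mulrC.
by rewrite /GRing.scale /= mulr1.
Qed.
Lemma deriv_cont (f f' : R -> R) : (forall x : R, is_derive x 1 f (f' x)) -> continuous f.
Proof.
move=> h x; apply: differentiable_continuous; apply/derivable1_diffP.
exact: (@ex_derive _ _ _ _ _ _ _ (h x)).
Qed.

Lemma ftc (f F f' : R -> R) (a b : R) : a <= b ->
  (forall x : R, is_derive x 1 f (f' x)) -> (forall x : R, is_derive x 1 F (f x)) ->
  (\int[mu]_(x in `[a, b]) (f x)%:E = (F b - F a)%:E)%E.
Proof.
move=> ab df dF.
have cF := @deriv_cont F f dF.
have cf := @deriv_cont f f' df.
case: (ltgtP a b) ab => // [ab _ | <- _].
- rewrite (@continuous_FTC2 _ f F) // ?EFinB //.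
  + by apply: continuous_subspaceT => x; exact: cf.
  + split.
    * move=> x _; exact: (@ex_derive _ _ _ _ _ _ _ (dF x)).
    * exact: cvg_at_right_filter (cF a).
    * exact: cvg_at_left_filter (cF b).
  + by move=> x _; rewrite derive1E; exact: derive_val.
- by rewrite set_itv1 integral_set1 subrr.
Qed.

Lemma integral_mrestr d (T : measurableType d) (m : {measure set T -> \bar R})
  (Sm : set T) (mS : measurable Sm) (D : set T) (f : T -> \bar R) :
  measurable D -> measurable_fun D f -> (forall x, D x -> (0 <= f x)%E) ->
  (\int[mrestr m mS]_(x in D) f x = \int[m]_(x in D `&` Sm) f x)%E.
Proof.
move=> mD mf f0.
have E := setUIDK D Sm.
transitivity (\int[mrestr m mS]_(x in (D `&` Sm) `|` (D `\` Sm)) f x)%E; first by rewrite E.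
rewrite ge0_integral_setU ?E //; first last.
- by apply/disj_setPS => x [[_ ?] [_ ?]].
- exact: measurableD.
- exact: measurableI.
rewrite (@null_set_integral _ _ _ (mrestr m mS) (D `\` Sm)) ?adde0 //; first last.
- by change (m ((D `\` Sm) `&` Sm)%classic = 0%E); rewrite setDKI measure0.
- by apply: (measurable_funS mD) mf => x [].
- exact: measurableD.
apply: eq_measure_integral => A mA AS.
by change (m (A `&` Sm)%classic = m A); rewrite setIidl // => x /AS [].
Qed.

Definition Sq : set (R * R) := (`[0%R, 1%R] `*` `[0%R, 1%R])%classic.
Lemma mSq : measurable Sq.
Proof. by apply: measurableX; exact: measurable_itv. Qed.

Lemma mfst (g : R -> R) : continuous g -> measurable_fun setT (fun z : R * R => g z.1).
Proof.
move=> cg; apply: measurableT_comp; first exact: continuous_measurable_fun.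
exact: measurable_fst.
Qed.
Lemma msnd (g : R -> R) : continuous g -> measurable_fun setT (fun z : R * R => g z.2).
Proof.
move=> cg; apply: measurableT_comp; first exact: continuous_measurable_fun.
exact: measurable_snd.
Qed.

Lemma ccos (a : R) : continuous (fun t : R => cos (a * t)).
Proof.
have -> : (fun t : R => cos (a * t)) = (fun t => cos (a * t + 0)).
  by apply/funext => t; rewrite addr0.
exact: deriv_cont (dcos a 0).
Qed.
Lemma csin (a : R) : continuous (fun t : R => sin (a * t)).
Proof.
have -> : (fun t : R => sin (a * t)) = (fun t => sin (a * t + 0)).
  by apply/funext => t; rewrite addr0.
exact: deriv_cont (dsin a 0).
Qed.

Lemma mQ : measurable_fun setT Q.
Proof.
rewrite /Q; apply: measurable_funD; apply: measurable_funX.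
- apply: measurable_funD; last exact: msnd (ccos _).
  apply: measurable_funD; [exact: measurable_cst | exact: mfst (ccos _)].
- apply: measurable_funD; [exact: mfst (csin _) | exact: msnd (csin _)].
Qed.
End SM.

Section SN.
Variable R : realType.
Notation mu := (@lebesgue_measure R).
Notation Q := (@Q R).

Definition QI : set (R * R) := (Q @^-1` `[0%R, 1%R])%classic.
Lemma mQI : measurable QI.
Proof. by rewrite /QI -[X in measurable X]setTI; apply: mQ => //; exact: measurable_itv. Qed.

Lemma c_coefE m : c_coef R m =
  fine (\int[(mu \x mu)%E]_(z in (QI `&` Sq R)%classic) (Q z ^+ m)%:E)%E.
Proof.
rewrite /c_coef /P2_distribution P2E.
have -> : @haar_torus R = mrestr (mu \x mu)%E (mSq R) by [].
have mQ' : @measurable_fun _ _ (measurableTypeR R * measurableTypeR R)%type R setT Q := @mQ R.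
rewrite (@ge0_integral_pushforward _ _ (measurableTypeR R * measurableTypeR R)%type R R Q mQ' (mrestr (mu \x mu)%E (mSq R)) `[0%R, 1%R]%classic (fun l => (l ^+ m)%:E)).
- rewrite (@integral_mrestr _ _ (measurableTypeR R * measurableTypeR R)%type (mu \x mu)%E (Sq R) (mSq R)).
  + by [].
  + exact: mQI.
  + apply/measurable_EFinP; apply: measurable_funTS; apply: measurable_funX; exact: mQ'.
  + by move=> z; rewrite /= in_itv /= => /andP[z0 _]; rewrite lee_fin exprn_ge0.
- exact: measurable_itv.
- apply/measurable_EFinP; apply: measurable_funTS; exact: measurable_funX.
- by move=> y; rewrite inE /= in_itv /= => /andP[y0 _]; rewrite lee_fin exprn_ge0.
Qed.

Notation T2 := (measurableTypeR R * measurableTypeR R)%type.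

Definition h m : R * R -> \bar R := (fun z => (Q z ^+ m)%:E) \_ (QI `&` Sq R)%classic.

Lemma mh m : @measurable_fun _ _ T2 _ setT (h m).
Proof.
have mD : @measurable _ T2 (QI `&` Sq R)%classic.
  by apply: measurableI; [exact: mQI | exact: mSq].
apply/(measurable_restrictT _ mD).
apply/measurable_EFinP; apply: measurable_funTS; apply: measurable_funX; exact: (@mQ R).
Qed.

Lemma h_ge0 m z : (0 <= h m z)%E.
Proof.
rewrite /h /patch; case: ifPn => // /set_mem [qi _]; move: qi.
by rewrite /QI /= in_itv /= => /andP[z0 _]; rewrite lee_fin exprn_ge0.
Qed.

Definition F m x := (\int[mu]_y h m (x, y))%E.

Lemma c_fub m : (\int[(mu \x mu)%E]_(z in (QI `&` Sq R)%classic) (Q z ^+ m)%:E)%E =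
  (\int[mu]_x F m x)%E.
Proof.
rewrite integral_mkcond.
exact: (@fubini_tonelli1 _ _ _ _ R mu mu (h m) (mh m) (h_ge0 m)).
Qed.

Lemma mF m : measurable_fun setT (F m).
Proof. exact: (@measurable_fun_fubini_tonelli_F _ _ _ _ R mu (h m) (mh m) (h_ge0 m)). Qed.

Lemma F_out m x : ~ (0 <= x <= 1) -> F m x = 0%E.
Proof.
move=> hx; rewrite /F; apply: integral0_eq => y _.
rewrite /h /patch; case: ifPn => // /set_mem [_ [/= xi _]].
by exfalso; apply: hx; move: xi; rewrite /= in_itv.
Qed.

Lemma F_in1 m x : 0 <= x < 1/2 ->
  F m x = (\int[mu]_(y in `[(1/2)%R, (x + 1/2)%R]%classic) (Q (x, y) ^+ m)%:E)%E.
Proof.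
move=> hx; rewrite /F [RHS]integral_mkcond; apply: eq_integral => y _.
rewrite /h /patch /=.
suff -> : ((x, y) \in (QI `&` Sq R)%classic) = (y \in `[1/2, x + 1/2]%classic) by [].
have hx' := hx; move/andP: hx' => [x0 xh].
apply/idP/idP.
- move=> /set_mem [qi [_ /= yi]]; apply/mem_set => /=.
  move: qi yi; rewrite /QI /= !in_itv /= => /andP[_ q1] yi.
  have := (@sec1 R x y hx yi). exact: (fun H => H.1 q1).
- move=> /set_mem /=; rewrite in_itv /= => /andP[y1 y2]; apply/mem_set; split.
    rewrite /QI /= in_itv /= Q_ge0 /=; apply: ((@sec1 R x y hx _).2); last by apply/andP; split.
    by apply/andP; split; lra.
  by split; rewrite /= in_itv /=; apply/andP; split; lra.
Qed.

Lemma F_in2 m x : 1/2 < x <= 1 ->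
  F m x = (\int[mu]_(y in `[(x - 1/2)%R, (1/2)%R]%classic) (Q (x, y) ^+ m)%:E)%E.
Proof.
move=> hx; rewrite /F [RHS]integral_mkcond; apply: eq_integral => y _.
rewrite /h /patch /=.
suff -> : ((x, y) \in (QI `&` Sq R)%classic) = (y \in `[x - 1/2, 1/2]%classic) by [].
have hx' := hx; move/andP: hx' => [x0 xh].
apply/idP/idP.
- move=> /set_mem [qi [_ /= yi]]; apply/mem_set => /=.
  move: qi yi; rewrite /QI /= !in_itv /= => /andP[_ q1] yi.
  have := (@sec2 R x y hx yi). exact: (fun H => H.1 q1).
- move=> /set_mem /=; rewrite in_itv /= => /andP[y1 y2]; apply/mem_set; split.
    rewrite /QI /= in_itv /= Q_ge0 /=; apply: ((@sec2 R x y hx _).2); last by apply/andP; split.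
    by apply/andP; split; lra.
  by split; rewrite /= in_itv /=; apply/andP; split; lra.
Qed.

Lemma F_ge0 m x : (0 <= F m x)%E.
Proof. by apply: integral_ge0 => y _; exact: h_ge0. Qed.

Lemma outer m : (\int[mu]_x F m x)%E =
  (\int[mu]_(x in `[0%R, (1/2)%R[%classic) F m x +
   \int[mu]_(x in `](1/2)%R, 1%R]%classic) F m x)%E.
Proof.
transitivity (\int[mu]_(x in `[0%R, 1%R]%classic) F m x)%E.
  rewrite [RHS]integral_mkcond; apply: eq_integral => x _.
  rewrite /patch; case: ifPn => // hx; apply: F_out => hx'; move: hx.
  by move=> /negP; apply; apply/mem_set; rewrite /= in_itv /=.
have E : (`[0%R, 1%R] `\ (1/2)%R = `[0%R, (1/2)%R[ `|` `](1/2)%R, 1%R] :> set R)%classic.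
  rewrite eqEsubset; split => x /=.
    rewrite !in_itv /= => -[/andP[x0 x1] xh].
    case: (ltgtP x (1/2)) => hx; [left | right | by []]; apply/andP; split => //.
  rewrite !in_itv /= => -[/andP[x0 x1] | /andP[x0 x1]]; split; try (apply/andP; split; lra);
    by move=> E; move: x1 x0; rewrite E; lra.
rewrite -(@integral_setD1 _ _ (1/2)%R); first last.
- by apply: measurable_funTS; exact: mF.
- by apply: measurableD; [exact: measurable_itv | exact: measurable_set1].
rewrite E ge0_integral_setU //.
- by apply: measurable_funTS; exact: mF.
- by move=> x _; exact: F_ge0.
- apply/disj_setPS => x [] /=; rewrite !in_itv /= => /andP[_ h1] /andP[h2 _].
  by move: h1 h2; lra.
Qed.
End SN.

Section SP.
Variable R : realType.
Notation mu := (@lebesgue_measure R).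
Notation Q := (@Q R).
Notation F := (@F R).

Lemma ftc2 (f G : R -> R) (a b : R) : a <= b ->
  (forall x : R, derivable f x 1) -> (forall x : R, is_derive x 1 G (f x)) ->
  (\int[mu]_(x in `[a, b]) (f x)%:E = (G b - G a)%:E)%E.
Proof.
move=> ab df dG; apply: (@ftc R f G (fun x => 'D_1 f x)) => // x.
all: try exact: derivableP.
Qed.

Lemma dB (f g : R -> R) (df dg x : R) : is_derive x 1 f df -> is_derive x 1 g dg ->
  is_derive x 1 (fun y => f y - g y) (df - dg).
Proof. move=> h1 h2; exact: (@is_deriveB _ _ _ f g x 1 df dg). Qed.

Lemma ftc3 (f G : R -> R) : (forall x : R, is_derive x 1 G (f x)) ->
  (forall x : R, derivable f x 1) -> forall (a b : R), a <= b ->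
  (\int[mu]_(x in `[a, b]) (f x)%:E = (G b - G a)%:E)%E.
Proof. by move=> dG df a b ab; apply: ftc2. Qed.

Lemma sE (a b : R) : a *: b = a * b. Proof. by []. Qed.

Lemma eqR (a b : R) : a = b -> a = b. Proof. by []. Qed.

Lemma dsin0 (a x : R) : is_derive x 1 (fun y => sin (a * y)) (a * cos (a * x)).
Proof.
have := @dsin R a 0 x; rewrite addr0.
by have -> : (fun y => sin (a * y + 0)) = (fun y => sin (a * y)) by apply/funext => y; rewrite addr0.
Qed.
Lemma dcos0 (a x : R) : is_derive x 1 (fun y => cos (a * y)) (- (a * sin (a * x))).
Proof.
have := @dcos R a 0 x; rewrite addr0.
by have -> : (fun y => cos (a * y + 0)) = (fun y => cos (a * y)) by apply/funext => y; rewrite addr0.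
Qed.
Lemma dcosB (a c x : R) : is_derive x 1 (fun y => cos (c - a * y)) (- ((- a) * sin (c - a * x))).
Proof.
have := @dcos R (- a) c x.
have -> : (fun y => cos (- a * y + c)) = (fun y => cos (c - a * y)).
  by apply/funext => y; congr cos; ring.
by have -> : - a * x + c = c - a * x by ring.
Qed.
Lemma dsinB (a c x : R) : is_derive x 1 (fun y => sin (c - a * y)) ((- a) * cos (c - a * x)).
Proof.
have := @dsin R (- a) c x.
have -> : (fun y => sin (- a * y + c)) = (fun y => sin (c - a * y)).
  by apply/funext => y; congr sin; ring.
by have -> : - a * x + c = c - a * x by ring.
Qed.

Ltac dsolve := repeat first [ apply: dD | apply: dB | apply: dM | apply: dC | apply: dId
   | apply: dsin | apply: dcos | apply: dsin0 | apply: dcos0 | apply: dsinB | apply: dcosB ].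
Ltac dev := apply: is_derive_eq; dsolve; rewrite ?sE; apply: eqR.
Ltac dvb := apply: ex_derive; dsolve.

Ltac side := first [ by move=> ?; dvb | by move=> ?; dev | by move=> ?; dev; ring | (match goal with |- is_true (@Order.le _ _ _ _) => lra end) | idtac ].

Lemma p1_0 : (\int[mu]_(x in `[0%R, (1/2)%R[%classic) F 0 x)%E = (1/8)%:E.
Proof.
transitivity (\int[mu]_(x in `[0%R, (1/2)%R[%classic) (x)%:E)%E.
  apply: eq_integral => x; rewrite inE /= in_itv /= => hx; rewrite F_in1 //.
  under eq_integral do rewrite expr0.
  move: hx => /andP[hx1 hx2].
  rewrite (@ftc2 (fun _ => 1) (fun y => y)); side.
  congr (_%:E); ring.
rewrite integral_itv_bndo_bndc; last first.
  by apply/measurable_EFinP; exact: measurable_funTS.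
have dG : forall x : R, is_derive x 1 (fun x => 1/2 * (x * x)) x.
  by move=> y; dev; lra.
rewrite (@ftc3 _ _ dG); side.
congr (_%:E); lra.
Qed.

Lemma p2_0 : (\int[mu]_(x in `](1/2)%R, 1%R]%classic) F 0 x)%E = (1/8)%:E.
Proof.
transitivity (\int[mu]_(x in `](1/2)%R, 1%R]%classic) (1 - x)%:E)%E.
  apply: eq_integral => x; rewrite inE /= in_itv /= => hx; rewrite F_in2 //.
  under eq_integral do rewrite expr0.
  move: hx => /andP[hx1 hx2].
  rewrite (@ftc2 (fun _ => 1) (fun y => y)); side.
  congr (_%:E); lra.
rewrite integral_itv_obnd_cbnd; last first.
  by apply/measurable_EFinP; apply: measurable_funTS; apply: measurable_funB.
have dG : forall x : R, is_derive x 1 (fun x => x - 1/2 * (x * x)) (1 - x).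
  by move=> y; dev; lra.
rewrite (@ftc3 _ _ dG); side.
congr (_%:E); lra.
Qed.

Lemma c0E : c_coef R 0 = 1/4.
Proof.
by rewrite c_coefE c_fub outer p1_0 p2_0 /= ; congr (_ : R); lra.
Qed.

Lemma pi0 : pi != 0 :> R.
Proof. by rewrite gt_eqF // pi_gt0. Qed.

Ltac fieldpi := let hp := fresh "hp" in let p := fresh "p" in
  have hp := pi0; move: hp; move: (pi : R) => p hp; field; try exact: hp.

Lemma inner1 x : 0 <= x < 1/2 ->
  F 1 x = (x * (3 + 2 * cos (2 * pi * x)) - 2 / pi * sin (2 * pi * x))%:E.
Proof.
move=> hx; rewrite F_in1 //.
under eq_integral do rewrite expr1 QE1 /=.
have dG : forall y : R, is_derive y 1 (fun y => (3 + 2 * cos (2 * pi * x)) * y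
   + 1 / pi * sin (2 * pi * y) - 1 / pi * sin (2 * pi * x - 2 * pi * y))
   (3 + 2 * cos (2 * pi * x) + 2 * cos (2 * pi * y) + 2 * cos (2 * pi * x - 2 * pi * y)).
  by move=> y; dev; fieldpi.
move: (hx) => /andP[hx1 hx2]; rewrite (@ftc3 _ _ dG); side.
have e1 : 2 * pi * (x + 1/2) = 2 * pi * x + pi :> R by field.
have e2 : 2 * pi * x - 2 * pi * (x + 1/2) = - pi :> R by field.
have e3 : 2 * pi * (1/2) = pi :> R by field.
have e4 : 2 * pi * x - 2 * pi * (1/2) = 2 * pi * x - pi :> R by field.
rewrite e2 e4 e1 e3 sinDpi sinN sinpi sinB sinpi cospi.
congr (_%:E); fieldpi.
Qed.

Lemma inner2 x : 1/2 < x <= 1 ->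
  F 1 x = ((1 - x) * (3 + 2 * cos (2 * pi * x)) + 2 / pi * sin (2 * pi * x))%:E.
Proof.
move=> hx; rewrite F_in2 //.
under eq_integral do rewrite expr1 QE1 /=.
have dG : forall y : R, is_derive y 1 (fun y => (3 + 2 * cos (2 * pi * x)) * y
   + 1 / pi * sin (2 * pi * y) - 1 / pi * sin (2 * pi * x - 2 * pi * y))
   (3 + 2 * cos (2 * pi * x) + 2 * cos (2 * pi * y) + 2 * cos (2 * pi * x - 2 * pi * y)).
  by move=> y; dev; fieldpi.
move: (hx) => /andP[hx1 hx2]; rewrite (@ftc3 _ _ dG); side.
have e1 : 2 * pi * (x - 1/2) = 2 * pi * x - pi :> R by field.
have e2 : 2 * pi * x - 2 * pi * (x - 1/2) = pi :> R by field.
have e3 : 2 * pi * (1/2) = pi :> R by field.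
have e4 : 2 * pi * x - 2 * pi * (1/2) = 2 * pi * x - pi :> R by field.
rewrite e2 e4 e1 e3 sinB sinpi cospi.
congr (_%:E); fieldpi.
Qed.

Lemma der_cont (f : R -> R) : (forall x : R, derivable f x 1) -> continuous f.
Proof.
move=> h x; apply: differentiable_continuous; apply/derivable1_diffP; exact: h.
Qed.

Lemma p1_1 : (\int[mu]_(x in `[0%R, (1/2)%R[%classic) F 1 x)%E = (3/8 - 3 / pi ^+ 2)%:E.
Proof.
transitivity (\int[mu]_(x in `[0%R, (1/2)%R[%classic)
   (x * (3 + 2 * cos (2 * pi * x)) - 2 / pi * sin (2 * pi * x))%:E)%E.
  by apply: eq_integral => x; rewrite inE /= in_itv /= => hx; rewrite inner1.
rewrite integral_itv_bndo_bndc; last first.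
  apply/measurable_EFinP; apply: measurable_funTS; apply: continuous_measurable_fun.
  by apply: der_cont => x; dvb.
have dH : forall x : R, is_derive x 1 (fun x => 3/2 * (x * x) + 1 / pi * (x * sin (2 * pi * x))
   + 3 / (2 * pi ^+ 2) * cos (2 * pi * x))
   (x * (3 + 2 * cos (2 * pi * x)) - 2 / pi * sin (2 * pi * x)).
  by move=> y; dev; fieldpi.
rewrite (@ftc3 _ _ dH); side.
have e3 : 2 * pi * (1/2) = pi :> R by field.
rewrite e3 !mulr0 sinpi cospi sin0 cos0.
congr (_%:E); fieldpi.
Qed.

Lemma p2_1 : (\int[mu]_(x in `](1/2)%R, 1%R]%classic) F 1 x)%E = (3/8 - 3 / pi ^+ 2)%:E.
Proof.
transitivity (\int[mu]_(x in `](1/2)%R, 1%R]%classic)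
   ((1 - x) * (3 + 2 * cos (2 * pi * x)) + 2 / pi * sin (2 * pi * x))%:E)%E.
  by apply: eq_integral => x; rewrite inE /= in_itv /= => hx; rewrite inner2.
rewrite integral_itv_obnd_cbnd; last first.
  apply/measurable_EFinP; apply: measurable_funTS; apply: continuous_measurable_fun.
  by apply: der_cont => x; dvb.
have dH : forall x : R, is_derive x 1 (fun x => 3 * x - 3/2 * (x * x)
   + 1 / pi * ((1 - x) * sin (2 * pi * x)) - 3 / (2 * pi ^+ 2) * cos (2 * pi * x))
   ((1 - x) * (3 + 2 * cos (2 * pi * x)) + 2 / pi * sin (2 * pi * x)).
  by move=> y; dev; fieldpi.
rewrite (@ftc3 _ _ dH); side.
have e3 : 2 * pi * (1/2) = pi :> R by field.
have e5 : 2 * pi * 1 = pi *+ 2 :> R by rewrite mulr1 mulr2n; ring.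
rewrite e3 e5 sinpi cospi sin2pi cos2pi.
congr (_%:E); fieldpi.
Qed.

Lemma c1E : c_coef R 1 = 3/4 - 6 / pi ^+ 2.
Proof.
rewrite c_coefE c_fub outer p1_1 p2_1 /=; congr (_ : R); lra.
Qed.

Lemma mth_val j (f : laurent R) n : mthetam1_pow j f n = (- n%:~R - 1) ^+ j * f n.
Proof.
elim: j => [|j IH]; first by rewrite expr0 mul1r.
rewrite /mthetam1_pow iterS -/(mthetam1_pow j f) /theta_t IH exprS; ring.
Qed.

Lemma op_val (f : laurent R) n : op_subst (L2tilde R) f n =
  9 * ((- n%:~R - 1) ^+ 2 * f n)
  + (-10) * ((- (n + 1)%:~R - 1) ^+ 2 * f (n + 1))
  + (-10) * ((- (n + 1)%:~R - 1) ^+ 1 * f (n + 1))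
  + (-3) * ((- (n + 1)%:~R - 1) ^+ 0 * f (n + 1))
  + 1 * ((- (n + 2)%:~R - 1) ^+ 2 * f (n + 2))
  + 2 * ((- (n + 2)%:~R - 1) ^+ 1 * f (n + 2))
  + 1 * ((- (n + 2)%:~R - 1) ^+ 0 * f (n + 2)).
Proof.
rewrite /op_subst /L2tilde !big_cons big_nil /mul_tinv !mth_val /= addr0 addr0.
by rewrite !addrA.
Qed.
End SP.

Theorem lemma5p3 (R : realType) :
  c_coef R 0 = 1 / 4 /\
  neg_part (op_subst (L2tilde R) (series_of (c_coef R)))
  = (fun n : int => if n == -1 then - 6 / (pi ^+ 2) else 0).
Proof.
split; first exact: c0E.
apply/funext => n; rewrite /neg_part.
case: n => [k|k]; first by [].
case: k => [|[|k]].
- rewrite /= op_val.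
  have -> : (Negz 0 + 1 = Posz 0) by [].
  have -> : (Negz 0 + 2 = Posz 1) by [].
  rewrite /series_of c0E c1E /=.
  rewrite !mulr0 ?mul0r ?add0r ?mulr0z ?mulr1z; ring.
- have -> : ((-2)%Z < 0) = true by [].
  have -> : ((-2)%Z == -1) = false by [].
  rewrite op_val.
  have -> : ((-2)%Z + 1 = Negz 0) by [].
  have -> : ((-2)%Z + 2 = Posz 0) by [].
  rewrite /series_of c0E !mulr0 !add0r mulr0z; ring.
- have -> : (Negz k.+2 < 0) = true by [].
  have -> : (Negz k.+2 == -1) = false by [].
  rewrite op_val.
  have -> : (Negz k.+2 + 1 = Negz k.+1) by [].
  have -> : (Negz k.+2 + 2 = Negz k) by rewrite !NegzE; lia.
  by rewrite /series_of /= !mulr0 !addr0.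
Qed.
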